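(* Let $A$ be an associative (not necessarily unital) algebra over a field which satisfies the identity $x_1x_2\cdots x_n=x_nx_{n-1}\cdots x_1$. Then $A$ satisfies the identity $x_1\cdots x_{n+1}=x_{\tau(1)}\cdots x_{\tau(n+1)}$ for every even permutation $\tau\in S_{n+1}$.
   Context: An identity is satisfied by $A$ if it holds upon substituting arbitrary elements of $A$ for the variables. *)

(* Defs.v *)
From HB Require Import structures.
From mathcomp Require Import all_boot all_order all_algebra all_fingroup.
Set Implicit Arguments. Unset Strict Implicit. Unset Printing Implicit Defensive.
Import GRing.Theory.
Local Open Scope ring_scope.

Definition nonunital_assoc_algebra (F : fieldType) (A : lmodType F)
    (mul : A -> A -> A) : Prop :=
  [/\ associative mul,
      (forall a b c, mul (a + b) c = mul a c + mul b c),
      (forall a b c, mul a (b + c) = mul a b + mul a c),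
      (forall (k : F) a b, mul (k *: a) b = k *: mul a b)
    & (forall (k : F) a b, mul a (k *: b) = k *: mul a b)].

(* The (nonempty) product x_0 x_1 ... x_m, left-bracketed, of a family
   indexed by 'I_m.+1 (bracketing is irrelevant by associativity). *)
Definition oprod (A : Type) (mul : A -> A -> A) (m : nat) (x : 'I_m.+1 -> A) : A :=
  foldl mul (x ord0) [seq x (lift ord0 i) | i <- enum 'I_m].

(* Main.v *)
Require Import Defs.
From HB Require Import structures.
From mathcomp Require Import all_boot all_order all_algebra all_fingroup.
From mathcomp Require Import zify.
Set Implicit Arguments. Unset Strict Implicit. Unset Printing Implicit Defensive.

Definition P (A:Type) (mul:A->A->A) (n:nat) (f:nat->A) := foldl mul (f 0) (map f (iota 1 n)).

Lemma P_S A mul n f : @P A mul n.+1 f = mul (P mul n f) (f n.+1).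
Proof. rewrite /P -[n.+1]addn1 iotaD map_cat foldl_cat /= addnC. done. Qed.

Lemma eq_P A mul n f g : (forall k, k <= n -> f k = g k) -> @P A mul n f = P mul n g.
Proof.
elim: n => [|n IH] H; first by rewrite /P /= H.
rewrite !P_S IH ?H // => k Hk; apply H; lia.
Qed.

Lemma P_group A mul (assoc : associative mul) i n f : i <= n ->
  @P A mul n.+1 f = P mul n (fun k => if k < i then f k else if k == i then mul (f i) (f i.+1) else f k.+1).
Proof.
elim: n => [|n IH] Hi.
  have -> : i = 0 by lia.
  by rewrite /P.
case Hin: (i == n.+1).
  move/eqP: Hin => ->.
  rewrite P_S P_S P_S -assoc ltnn eqxx; congr mul.
  apply: eq_P => k Hk. have -> : k < n.+1 by lia. done.
rewrite P_S IH; last by lia.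
rewrite P_S; congr mul.
have -> : (n.+1 < i) = false by lia.
by rewrite eq_sym Hin.
Qed.

Definition sw i k := if k == i then i.+1 else if k == i.+1 then i else k.

Lemma P_rev_block A mul (assoc : associative mul) m
  (Hrev : forall f, @P A mul m f = P mul m (fun k => f (m - k))) i f : i <= m ->
  P mul m.+1 f = P mul m.+1 (fun k => f (sw i (m.+1 - k))).
Proof.
move=> Him.
rewrite (P_group assoc (i:=i)) // Hrev (P_group assoc (i:=m-i)); last by lia.
apply: eq_P => k Hk; rewrite /sw.
have [h|h|h] := ltngtP k (m - i).
- have -> : (m - k < i) = false by lia.
  have -> : (m - k == i) = false by lia.
  have -> : (m.+1 - k == i) = false by lia.
  have -> : (m.+1 - k == i.+1) = false by lia.
  congr f; lia.
- have -> : (m - k < i) = true by lia.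
  have -> : (m.+1 - k.+1 == i) = false by lia.
  have -> : (m.+1 - k.+1 == i.+1) = false by lia.
  congr f; lia.
- rewrite h.
  have -> : (m - (m - i) < i) = false by lia.
  have -> : (m - (m - i) == i) = true by lia.
  have -> : (m.+1 - (m - i) == i) = false by lia.
  have -> : (m.+1 - (m - i) == i.+1) = true by lia.
  done.
Qed.

Lemma oprodE A mul n (x : 'I_n.+1 -> A) : oprod mul x = P mul n (fun k => x (inord k)).
Proof.
rewrite /oprod /P.
have -> : x (inord 0) = x ord0 by congr x; apply/val_inj; rewrite /= inordK.
congr foldl.
have -> : iota 1 n = map (fun i : 'I_n => (lift ord0 i : nat)) (enum 'I_n).
  rewrite (eq_map (g := succn \o val)); last by move=> i; rewrite lift0.
  by rewrite map_comp val_enum_ord -(addn0 1) iotaDl.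
rewrite -map_comp; apply: eq_map => i /=; congr x; apply: val_inj.
by rewrite /= inordK //; exact: (ltn_ord (lift ord0 i)).
Qed.

Definition Inv A mul n (p : 'S_n.+1) :=
  forall x : 'I_n.+1 -> A, oprod mul x = oprod mul (fun i => x (p i)).

Lemma eq_oprod A mul n (x y : 'I_n.+1 -> A) : x =1 y -> oprod mul x = oprod mul y.
Proof. move=> e; rewrite /oprod e; congr foldl; apply: eq_map => i; exact: e. Qed.

Lemma sw_lt i m k : i <= m -> k < m.+2 -> sw i k < m.+2.
Proof. rewrite /sw => ? ?; case: ifP => /eqP ?; try lia. case: ifP => /eqP ?; lia. Qed.

Lemma tperm_val m i (z : 'I_m.+2) : i <= m ->
  val (tperm (inord i : 'I_m.+2) (inord i.+1) z) = sw i z.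
Proof.
move=> Hi; case: tpermP => [->|->|h1 h2]; rewrite /sw /=.
- rewrite !inordK ?eqxx //; lia.
- rewrite !inordK; try lia. have -> : (i.+1 == i) = false by lia. by rewrite eqxx.
- have e1 : (nat_of_ord z == i) = false.
    apply/eqP => e; apply: h1; apply/val_inj; rewrite /= inordK; lia.
  have e2 : (nat_of_ord z == i.+1) = false.
    apply/eqP => e; apply: h2; apply/val_inj; rewrite /= inordK; lia.
  by rewrite e1 e2.
Qed.

Lemma key_ord A mul (assoc : associative mul) m
  (H : forall x : 'I_m.+1 -> A, oprod mul x = oprod mul (fun i => x (rev_ord i)))
  i (x : 'I_m.+2 -> A) : i <= m ->
  oprod mul x = oprod mul (fun k => x (tperm (inord i) (inord i.+1) (rev_ord k))).
Proof.
move=> Hi.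
have Hrev : forall f, P mul m f = P mul m (fun k => f (m - k)).
  move=> f.
  transitivity (P mul m (fun k => f (@inord m k))).
    by apply: eq_P => k hk; rewrite inordK.
  have := H (fun j : 'I_m.+1 => f j); rewrite !oprodE /= => ->.
  apply: eq_P => k hk; rewrite /= inordK //; lia.
rewrite !oprodE (P_rev_block assoc Hrev (i:=i)) //.
apply: eq_P => k hk; congr x; apply: val_inj.
rewrite tperm_val // /= !inordK //; try lia.
apply: sw_lt; lia.
Qed.

Lemma InvM A mul n (p q : 'S_n.+1) : Inv mul p -> Inv (A:=A) mul q -> Inv mul (p * q)%g.
Proof.
move=> hp hq x; rewrite (hq x) (hp (fun i => x (q i))).
by apply: eq_oprod => i; rewrite permM.
Qed.

Lemma InvV A mul n (p : 'S_n.+1) : Inv (A:=A) mul p -> Inv mul p^-1%g.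
Proof.
move=> hp x; rewrite (hp (fun i => x (p^-1%g i))).
by apply: eq_oprod => i; rewrite permK.
Qed.

Lemma Inv1 A mul n : Inv (A:=A) (n:=n) mul 1%g.
Proof. by move=> x; apply: eq_oprod => i; rewrite perm1. Qed.

Definition tt m j : 'S_m.+2 := tperm (inord j : 'I_m.+2) (inord j.+1).

Lemma grp_id (gT : finGroupType) (s u T : gT) : (s^-1 = s)%g -> (u * u = 1)%g ->
  (T ^ s * u = (s * u) * ((u * T) * (s * u)))%g.
Proof.
move=> sV uu; rewrite conjgE sV !mulgA -(mulgA s u u) uu mulg1 //.
Qed.


Lemma main_inv A mul (assoc : associative mul) m
  (H : forall x : 'I_m.+1 -> A, oprod mul x = oprod mul (fun i => x (rev_ord i))) :
  forall a b : 'I_m.+2, a != b -> Inv mul (tperm a b * tt m 0)%g.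
Proof.
have Key2 : forall j, j <= m -> Inv mul (tt m j * tt m 0)%g.
  move=> j hj x.
  rewrite (key_ord assoc H (i:=0) x) // (key_ord assoc H (i:=j) (fun k => x ((tt m j * tt m 0)%g k))) //.
  by apply: eq_oprod => k; rewrite permM /tt tpermK.
have Hd : forall d (a b : 'I_m.+2), nat_of_ord b = a + d.+1 -> Inv mul (tperm a b * tt m 0)%g.
  elim=> [|d IH] a b hb; have ha' := ltn_ord a; have hb' := ltn_ord b.
    have -> : tperm a b = tt m a.
      rewrite /tt; congr tperm; apply/val_inj; rewrite /= inordK; lia.
    apply: Key2; lia.
  have hbm : b < m.+2 := ltn_ord b.
  pose c : 'I_m.+2 := inord (a + d.+1).
  have hc : nat_of_ord c = a + d.+1 by rewrite /c inordK; lia.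
  have -> : tperm a b = ((tperm a c) ^ (tt m (a + d.+1)))%g.
    rewrite tpermJ; congr tperm; apply/val_inj; rewrite /tt tperm_val; try lia;
      rewrite /sw ?hc.
    - have -> : (nat_of_ord a == a + d.+1) = false by lia.
      have -> : (nat_of_ord a == (a + d.+1).+1) = false by lia.
      done.
    - rewrite eqxx /=; lia.
  rewrite grp_id ?tpermV ?tperm2 //.
  apply: InvM; first by apply: Key2; lia.
  apply: InvM; last by apply: Key2; lia.
  have := InvV (IH a c hc); rewrite invMg !tpermV; exact.
move=> a b; case: (ltngtP a b) => hab nab.
- apply: (Hd (b - a).-1); lia.
- rewrite tpermC; apply: (Hd (a - b).-1); lia.
- by move: nab; rewrite (val_inj hab) eqxx.
Qed.

Theorem lemma3p2 (F : fieldType) (A : lmodType F) (mul : A -> A -> A)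
    (m : nat) :
  nonunital_assoc_algebra mul ->
  (forall x : 'I_m.+1 -> A, oprod mul x = oprod mul (fun i => x (rev_ord i))) ->
  forall tau : 'S_m.+2, ~~ odd_perm tau ->
  forall x : 'I_m.+2 -> A, oprod mul x = oprod mul (fun i => x (tau i)).
Proof.
move=> [assoc _ _ _ _] H tau Htau.
have [ts def dts] := prod_tpermP tau.
rewrite def odd_perm_prod // in Htau.
have MI := main_inv assoc H.
suff : forall ts : seq ('I_m.+2 * 'I_m.+2), all dpair ts ->
  if odd (size ts) then Inv mul (tt m 0 * \prod_(t <- ts) tperm t.1 t.2)%g
  else Inv mul (\prod_(t <- ts) tperm t.1 t.2)%g.
  by move=> /(_ ts dts); rewrite (negbTE Htau) -def.
elim=> [|[a b] s IH] /=; first by rewrite big_nil => _; exact: Inv1.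
move=> /andP [dab ds]; rewrite big_cons /=.
move: (IH ds); case: (odd (size s)) => /= hI.
- have e : forall u v : 'S_m.+2, (u * v = (u * tt m 0) * (tt m 0 * v))%g.
    by move=> u v; rewrite mulgA -(mulgA u) /tt tperm2 mulg1.
  rewrite e; apply: InvM => //; exact: MI.
- rewrite mulgA; apply: InvM => //.
  have := InvV (MI a b dab); rewrite invMg !tpermV; exact.
Qed.
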